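(* Let $\delta\in[1/3,1]$, $\alpha>0$ with $\alpha\delta<1$, $\eta_0^{2}=\frac{1+\alpha^{2}}{1+\delta^{2}}$, and let $x\mapsto B_0(x)$ be a continuous function with values in $[0,\sqrt{1-\eta_0^2\delta^2}]$. Set $\widetilde{A_\ast}(x)=\sqrt{1-(1+\delta^2)B_0(x)^2}$ and let $\lambda_r(x),\lambda_i(x)\ge0$ be defined by $2\lambda_r^{2}=\sqrt2\,\widetilde{A_\ast}+\varepsilon^{2}B_0^{2}(1+\delta^{2})^{2}$, $2\lambda_i^{2}=\sqrt2\,\widetilde{A_\ast}-\varepsilon^{2}B_0^{2}(1+\delta^{2})^{2}$. Let $\mathbf S_0(x,s)$, $\mathbf S_1(x,s)$ be the solution (monodromy) operators on $\mathbb{R}^2$ of $X'=\mathbf L_0(x)X$ and $Y'=\mathbf L_1(x)Y$, where $$\mathbf L_0=\begin{pmatrix}\lambda_r&\lambda_i\\-\lambda_i&\lambda_r\end{pmatrix},\qquad \mathbf L_1=\begin{pmatrix}-\lambda_r&\lambda_i\\-\lambda_i&-\lambda_r\end{pmatrix},$$ i.e. $\partial_x\mathbf S_j(x,s)=\mathbf L_j(x)\mathbf S_j(x,s)$, $\mathbf S_j(x,x)=\mathbb I$. If $\alpha\ge\frac{10}{3}\varepsilon^2$ and $\varepsilon>0$ is small enough, then, with $\sigma=\frac{(\alpha\delta)^{1/2}}{2^{1/4}}$ and the operator norm induced by the Euclidean norm, $$\|\mathbf S_0(x,s)\|\le e^{\sigma(x-s)}\ \text{ for } x<s,\qquad \|\mathbf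 S_1(x,s)\|\le e^{-\sigma(x-s)}\ \text{ for } s<x.$$ *)

(* Defs.v *)
From HB Require Import structures.
From mathcomp Require Import all_boot all_order all_algebra.
From mathcomp Require Import all_classical all_reals all_analysis.
Set Implicit Arguments. Unset Strict Implicit. Unset Printing Implicit Defensive.
Import Order.TTheory GRing.Theory Num.Theory.
Import numFieldNormedType.Exports.
Local Open Scope classical_set_scope.
Local Open Scope ring_scope.

Definition mx2 {R : realType} (a b c d : R) : 'M[R]_2 :=
  \matrix_(i < 2, j < 2)
    (if i == ord0 then (if j == ord0 then a else b)
                  else (if j == ord0 then c else d)).

Definition enorm2 {R : realType} (v : 'cV[R]_2) : R :=
  Num.sqrt (v ord0 ord0 ^+ 2 + v (lift ord0 ord0) ord0 ^+ 2).

Definition opnorm2 {R : realType} (A : 'M[R]_2) : R :=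
  sup [set enorm2 (A *m v) | v in [set v : 'cV[R]_2 | enorm2 v <= 1]].

Definition solution_operator {R : realType} (L : R -> 'M[R]_2)
  (S : R -> R -> 'M[R]_2) : Prop :=
  (forall s x : R, is_derive x (1 : R) (fun y => S y s) (L x *m S x s)) /\
  (forall x, S x x = 1%:M).

(* Main.v *)
Require Import Defs.
From HB Require Import structures.
From mathcomp Require Import all_boot all_order all_algebra.
From mathcomp Require Import all_classical all_reals all_analysis.
From mathcomp Require Import ring lra.
Import Order.TTheory GRing.Theory Num.Theory.
Import numFieldNormedType.Exports.
Local Open Scope classical_set_scope.
Local Open Scope ring_scope.

Section S.
Context {R : realType}.

Lemma mono_der (G dG : R -> R) :
  (forall y : R, is_derive y (1:R) G (dG y)) -> (forall y, 0 <= dG y) ->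
  forall a b, a <= b -> G a <= G b.
Proof.
move=> dG0 pos a b ab.
have [|c _ E] := MVT_segment ab (fun y _ => dG0 y).
  apply/continuous_subspaceT=> r.
  apply/differentiable_continuous/derivable1_diffP.
  by have [] := dG0 r.
by rewrite -subr_ge0 E mulr_ge0 // subr_ge0.
Qed.

Lemma entry_derive (M : R -> 'M[R]_2) x D i j :
  is_derive x (1:R) M D -> is_derive x (1:R) (fun y => M y i j) (D i j).
Proof.
move=> [dM <-].
have dij := (derivable_mxP M x 1).1 dM i j.
apply: DeriveDef => //.
by rewrite derive_mx // mxE.
Qed.

Lemma der_conv (f g : R -> R) x df dg :
  is_derive x (1:R) f df -> (forall z, f z = g z) -> df = dg -> is_derive x (1:R) g dg.
Proof.
by move=> H fg <-; have -> : g = f by apply/funext=> z; rewrite fg.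
Qed.

Local Notation i1 := (lift (@ord0 1) (@ord0 0)).
Local Notation i0 := (@ord0 1).

Lemma mulmx2 (A : 'M[R]_2) (v : 'cV[R]_2) i :
  (A *m v) i ord0 = A i i0 * v i0 ord0 + A i i1 * v i1 ord0.
Proof. by rewrite mxE big_ord_recl big_ord1. Qed.

Lemma normsq_derive (r i : R -> R) (S : R -> R -> 'M[R]_2) s (v : 'cV[R]_2) y :
  solution_operator (fun x => mx2 (r x) (i x) (- i x) (r x)) S ->
  is_derive y (1:R) (fun y => (S y s *m v) i0 ord0 ^+ 2 + (S y s *m v) i1 ord0 ^+ 2)
    (2 * r y * ((S y s *m v) i0 ord0 ^+ 2 + (S y s *m v) i1 ord0 ^+ 2)).
Proof.
move=> [dS _].
have E k l : is_derive y (1:R) (fun z => S z s k l) ((mx2 (r y) (i y) (- i y) (r y) *m S y s) k l).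
  exact: entry_derive.
set v0 := v i0 ord0; set v1 := v i1 ord0.
have hP k : is_derive y (1:R) (fun z => (S z s *m v) k ord0)
   ((mx2 (r y) (i y) (- i y) (r y) *m S y s) k i0 * v0 +
    (mx2 (r y) (i y) (- i y) (r y) *m S y s) k i1 * v1).
  have H := (is_deriveD (is_deriveM (E k i0) (is_derive_cst v0 y 1)) (is_deriveM (E k i1) (is_derive_cst v1 y 1))).
  refine (@der_conv _ _ _ _ _ H _ _).
  - by move=> z; rewrite mulmx2.
  - by rewrite /= !scaler0 !add0r /GRing.scale /= mulrC [X in _ + X]mulrC.
have H := (is_deriveD (is_deriveX 2 (hP i0)) (is_deriveX 2 (hP i1))).
refine (@der_conv _ _ _ _ _ H _ _).
- by [].
rewrite /= !mulmx2 !mxE /= /GRing.scale /=.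
rewrite /v0 /v1.
rewrite !big_ord_recl !big_ord0 /mx2 !mxE /=.
ring.
Qed.
Lemma opnorm_bound (A : 'M[R]_2) (b : R) : 0 <= b ->
  (forall v : 'cV[R]_2, v i0 ord0 ^+ 2 + v i1 ord0 ^+ 2 <= 1 ->
     (A *m v) i0 ord0 ^+ 2 + (A *m v) i1 ord0 ^+ 2 <= b ^+ 2) ->
  opnorm2 A <= b.
Proof.
move=> b0 H; apply: ge_sup.
  exists (enorm2 (A *m 0)), 0 => //=.
  by rewrite /enorm2 !mxE expr0n /= addr0 sqrtr0.
move=> _ [w hw <-]; rewrite /enorm2.
have hw' : w i0 ord0 ^+ 2 + w i1 ord0 ^+ 2 <= 1.
  by move: hw; rewrite /= /enorm2 -{1}sqrtr1 ler_sqrt.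
rewrite -(ger0_norm b0) -sqrtr_sqr ler_sqrt ?H //.
all: try by rewrite ?addr_ge0 ?sqr_ge0.

Qed.

Lemma der_lin (c : R) y : is_derive y (1:R) (fun z : R => c * z) c.
Proof.
have H := is_deriveM (is_derive_cst c y 1) (is_derive_id y (1:R)).
refine (@der_conv _ _ _ _ _ H _ _) => //.
by rewrite /GRing.scale /= mulr1 mulr0 addr0.
Qed.

Lemma der_G (F r : R -> R) c y :
  (forall y, is_derive y (1:R) F (2 * r y * F y)) ->
  is_derive y (1:R) (fun z => F z * expR (c * z)) ((2 * r y + c) * F y * expR (c * y)).
Proof.
move=> dF.
have He : is_derive y (1:R) (expR \o (fun z : R => c * z)) (expR (c * y) * c).
  exact: (is_derive1_comp (is_derive_expR (c * y)) (der_lin c y)).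
have H := is_deriveM (dF y) He.
refine (@der_conv _ _ _ _ _ H _ _) => //.
rewrite /GRing.scale /=; ring.
Qed.

Lemma fin_bound (Fx c x s t : R) : 0 <= Fx ->
  Fx * expR (c * x) <= expR (c * s) -> c * s - c * x = 2 * t ->
  Num.sqrt Fx <= expR t.
Proof.
move=> F0 H E.
have : Fx <= expR t ^+ 2.
  rewrite -expRM_natl -E expRB ler_pdivlMr ?expR_gt0 //.
move=> h; rewrite -(ger0_norm (expR_ge0 t)) -sqrtr_sqr ler_sqrt //.
all: try by rewrite sqr_ge0.
Qed.

Lemma fin_bound2 (Fx c x s t : R) :
  Fx * expR (c * x) <= expR (c * s) -> c * s - c * x = 2 * t ->
  Fx <= expR t ^+ 2.
Proof.
move=> H E.
by rewrite -expRM_natl -E expRB ler_pdivlMr ?expR_gt0.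
Qed.

Lemma S_bound0 (r i : R -> R) (S : R -> R -> 'M[R]_2) k :
  (forall y, k <= r y) ->
  solution_operator (fun x => mx2 (r x) (i x) (- i x) (r x)) S ->
  forall x s, x < s -> opnorm2 (S x s) <= expR (k * (x - s)).
Proof.
move=> hr hS x s xs.
apply: opnorm_bound; first exact: expR_ge0.
move=> v hv.
pose F := fun y => (S y s *m v) i0 ord0 ^+ 2 + (S y s *m v) i1 ord0 ^+ 2.
have dF y : is_derive y (1:R) F (2 * r y * F y) by exact: (@normsq_derive r i S s v y hS).
have F0 y : 0 <= F y by rewrite /F addr_ge0 ?sqr_ge0.
have Fs : F s <= 1 by rewrite /F (proj2 hS) mul1mx.
have mono := @mono_der (fun z => F z * expR (- (2 * k) * z))
   (fun y => (2 * r y + - (2 * k)) * F y * expR (- (2 * k) * y))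
   (fun y => @der_G F r _ y dF).
have h1 : F x * expR (- (2 * k) * x) <= expR (- (2 * k) * s).
  apply: le_trans (mono _ _ _ (ltW xs)) _.
    move=> y; rewrite mulr_ge0 ?expR_ge0 // mulr_ge0 //.
    by have := hr y; lra.
  by rewrite ler_piMl ?expR_ge0.
refine (@fin_bound2 (F x) _ x s _ h1 _); ring.
Qed.

Lemma S_bound1 (r i : R -> R) (S : R -> R -> 'M[R]_2) k :
  (forall y, r y <= - k) ->
  solution_operator (fun x => mx2 (r x) (i x) (- i x) (r x)) S ->
  forall x s, s < x -> opnorm2 (S x s) <= expR (- (k * (x - s))).
Proof.
move=> hr hS x s xs.
apply: opnorm_bound; first exact: expR_ge0.
move=> v hv.
pose F := fun y => (S y s *m v) i0 ord0 ^+ 2 + (S y s *m v) i1 ord0 ^+ 2.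
have dF y : is_derive y (1:R) F (2 * r y * F y) by exact: (@normsq_derive r i S s v y hS).
have F0 y : 0 <= F y by rewrite /F addr_ge0 ?sqr_ge0.
have Fs : F s <= 1 by rewrite /F (proj2 hS) mul1mx.
have mono := @mono_der (fun z => - (F z * expR ((2 * k) * z)))
   (fun y => - ((2 * r y + (2 * k)) * F y * expR ((2 * k) * y)))
   (fun y => is_deriveN (@der_G F r _ y dF)).
have h1 : F x * expR ((2 * k) * x) <= expR ((2 * k) * s).
  have pos y : 0 <= - ((2 * r y + (2 * k)) * F y * expR ((2 * k) * y)).
    rewrite oppr_ge0 mulr_le0_ge0 ?expR_ge0 // mulr_le0_ge0 //.
    by have := hr y; lra.
  have := mono pos _ _ (ltW xs).
  rewrite lerN2 => h; apply: le_trans h _.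
  by rewrite ler_piMl ?expR_ge0.
refine (@fin_bound2 (F x) _ x s _ h1 _); ring.
Qed.

End S.

Theorem lemma15 (R : realType) :
  exists eps0 : R, 0 < eps0 /\
  forall (eps delta alpha eta0 : R) (B0 lam_r lam_i : R -> R)
         (S0 S1 : R -> R -> 'M[R]_2),
    0 < eps -> eps < eps0 ->
    1 / 3 <= delta <= 1 -> 0 < alpha -> alpha * delta < 1 ->
    eta0 ^+ 2 = (1 + alpha ^+ 2) / (1 + delta ^+ 2) ->
    continuous B0 ->
    (forall x, 0 <= B0 x <= Num.sqrt (1 - eta0 ^+ 2 * delta ^+ 2)) ->
    (forall x, 0 <= lam_r x /\ 0 <= lam_i x) ->
    (forall x, 2 * lam_r x ^+ 2 =
       Num.sqrt 2 * Num.sqrt (1 - (1 + delta ^+ 2) * B0 x ^+ 2)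
       + eps ^+ 2 * B0 x ^+ 2 * (1 + delta ^+ 2) ^+ 2) ->
    (forall x, 2 * lam_i x ^+ 2 =
       Num.sqrt 2 * Num.sqrt (1 - (1 + delta ^+ 2) * B0 x ^+ 2)
       - eps ^+ 2 * B0 x ^+ 2 * (1 + delta ^+ 2) ^+ 2) ->
    solution_operator (fun x => mx2 (lam_r x) (lam_i x) (- lam_i x) (lam_r x)) S0 ->
    solution_operator (fun x => mx2 (- lam_r x) (lam_i x) (- lam_i x) (- lam_r x)) S1 ->
    alpha >= 10 / 3 * eps ^+ 2 ->
    let sigma := Num.sqrt (alpha * delta) / Num.sqrt (Num.sqrt 2) in
    (forall x s, x < s -> opnorm2 (S0 x s) <= expR (sigma * (x - s))) /\
    (forall x s, s < x -> opnorm2 (S1 x s) <= expR (- (sigma * (x - s)))).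
Proof.
exists 1; split => //.
move=> eps delta alpha eta0 B0 lr li S0 S1 e0 _ /andP[d1 d2] a0 ad1 heta _ hB
  hlpos hl _ hS0 hS1 _ sigma.
have d0 : 0 < delta by lra.
have ad0 : 0 <= alpha * delta by rewrite mulr_ge0 // ltW.
have hd : 0 < 1 + delta ^+ 2 by rewrite ltr_pwDl ?sqr_ge0.
have heta' : eta0 ^+ 2 * (1 + delta ^+ 2) = 1 + alpha ^+ 2.
  by rewrite heta divfK // gt_eqF.
have s2pos : 0 < Num.sqrt (2:R) by rewrite sqrtr_gt0.
have s2 : Num.sqrt (2:R) ^+ 2 = 2 by rewrite sqr_sqrtr.
have hs y : sigma <= lr y.
  have key : (1 + delta ^+ 2) * B0 y ^+ 2 <= 1 - (alpha * delta) ^+ 2.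
    case/andP: (hB y) => b0 b1.
    case: (leP 0 (1 - eta0 ^+ 2 * delta ^+ 2)) => h.
      have hb2 : B0 y ^+ 2 <= 1 - eta0 ^+ 2 * delta ^+ 2.
        by rewrite -(sqr_sqrtr h) ler_sqr // nnegrE ?sqrtr_ge0.
      have := ler_wpM2l (ltW hd) hb2.
      move=> h2; apply: le_trans h2 _.
      have := congr1 (fun z => z * delta ^+ 2) heta'.
      rewrite /= exprMn => hh; nra.
    have : B0 y = 0.
      by apply/eqP; rewrite eq_le b0 andbT -(ler0_sqrtr (ltW h)).
    move=> ->; rewrite expr0n /= mulr0 subr_ge0.
    rewrite -(expr1n _ 2) ler_sqr ?nnegrE //; exact: ltW.
  have Ast : alpha * delta <= Num.sqrt (1 - (1 + delta ^+ 2) * B0 y ^+ 2).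
    rewrite -(ger0_norm ad0) -sqrtr_sqr ler_sqrt; first by lra.
    by rewrite subr_ge0; apply: le_trans key _; have := sqr_ge0 (alpha * delta); lra.
  have E0 : 0 <= eps ^+ 2 * B0 y ^+ 2 * (1 + delta ^+ 2) ^+ 2.
    by apply: mulr_ge0; [apply: mulr_ge0|]; exact: sqr_ge0.
  have sig2 : sigma ^+ 2 = alpha * delta / Num.sqrt 2.
    by rewrite /sigma expr_div_n !sqr_sqrtr // ?sqrtr_ge0.
  rewrite -ler_sqr ?nnegrE ?(proj1 (hlpos y)) ?divr_ge0 ?sqrtr_ge0 // sig2.
  rewrite ler_pdivrMr //.
  have := hl y; have := (proj1 (hlpos y)).
  move: (Num.sqrt (1 - (1 + delta ^+ 2) * B0 y ^+ 2)) Ast => A Ast l0 hly.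
  nra.
split.
- exact: (@S_bound0 R lr li S0 sigma hs hS0).
- apply: (@S_bound1 R (fun x => - lr x) li S1 sigma _ hS1).
  by move=> y; rewrite lerN2.
Qed.
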